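(* Let $p,q\ge2$ and $n\ge1$. If $A\in\Omega_1(p,n)$ and $B\in\Omega_1(q,n)$, then $A\times B\in\Omega_1(p+q-2,n)$.
   Context: Let $I_n=\{1,\dots,n\}$. A $d$-dimensional matrix of order $n$ is a function $I_n^d\to\mathbb R$; write $a_{i_1\cdots i_d}=A(i_1,\dots,i_d)$. A line is the set of positions obtained by varying one coordinate and fixing the others. $\Omega_1(d,n)$ is the set of non-negative $d$-dimensional matrices of order $n$ whose entries in every line sum to $1$. For a $p$-dimensional $A$ and a $q$-dimensional $B$ of order $n$, the product $A\times B$ is the $(p+q-2)$-dimensional matrix of order $n$ with $(A\times B)_{i_1\cdots i_{p+q-2}}=\sum_{j=1}^n a_{i_1\cdots i_{p-1}j}\,b_{j i_p\cdots i_{p+q-2}}$. *)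

(* Defs.v *)
From mathcomp Require Import all_boot all_order all_algebra.
Set Implicit Arguments. Unset Strict Implicit. Unset Printing Implicit Defensive.
Import Order.TTheory GRing.Theory Num.Theory.
Local Open Scope ring_scope.

(* A d-dimensional matrix of order n over R: a function I_n^d -> R.
   Positions are functions 'I_d -> 'I_n (coordinate k gives i_{k+1}). *)
Definition mxd (R : Type) (d n : nat) := ({ffun 'I_d -> 'I_n} -> R).

Definition setpos d n (i : {ffun 'I_d -> 'I_n}) (k : 'I_d) (j : 'I_n)
  : {ffun 'I_d -> 'I_n} := [ffun l => if l == k then j else i l].

(* Omega_1(d,n): nonnegative, every line sums to 1.  A line is determined by
   a direction k and a position i (whose k-th coordinate is varied). *)
Definition Omega1 (R : numDomainType) d n (A : mxd R d n) : Prop :=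
  (forall i, 0 <= A i) /\
  (forall (k : 'I_d) (i : {ffun 'I_d -> 'I_n}),
      \sum_(j < n) A (setpos i k j) = 1).

(* read coordinate m (0-based, as a nat) of a position, default x0 if out of range *)
Definition coord d n (i : {ffun 'I_d -> 'I_n}) (m : nat) (x0 : 'I_n) : 'I_n :=
  odflt x0 (omap i (insub m)).

(* Product A x B of a p-dim A and q-dim B: (p+q-2)-dimensional,
   (A x B)_{i_1..i_{p+q-2}} = sum_j a_{i_1..i_{p-1} j} b_{j i_p .. i_{p+q-2}}.
   With 0-based coordinates: A-index has coordinates i_0..i_{p-2}, j;
   B-index has j, i_{p-1}, .., i_{p+q-3}. *)
Definition mxd_mul (R : pzSemiRingType) (p q n : nat) (A : mxd R p n) (B : mxd R q n)
  : mxd R (p + q - 2) n :=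
  fun i => \sum_(j < n)
    (A [ffun k : 'I_p => if (k < p - 1)%N then coord i k j else j] *
     B [ffun k : 'I_q => if k == 0%N :> nat then j else coord i (p - 1 + (k - 1)) j]).

(* Main.v *)
Require Import Defs.
From mathcomp Require Import all_boot all_order all_algebra.
From mathcomp Require Import zify.
Import Order.TTheory GRing.Theory Num.Theory.
Local Open Scope ring_scope.

Lemma coord_setpos d n (i : {ffun 'I_d -> 'I_n}) k t m x0 :
  Defs.coord (setpos i k t) m x0 = if m == nat_of_ord k then t else Defs.coord i m x0.
Proof.
rewrite /Defs.coord; case: insubP => [u _ <-|hn] /=.
  by rewrite /setpos ffunE.
case: eqP => // hm; exfalso; move/negP: hn; apply; by rewrite hm ltn_ord.
Qed.

Lemma coord_def d n (i : {ffun 'I_d -> 'I_n}) m x y :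
  (m < d)%N -> Defs.coord i m x = Defs.coord i m y.
Proof. by move=> hm; rewrite /Defs.coord; case: insubP => [//|]; rewrite hm. Qed.

Theorem lemma3p4 (R : realFieldType) (p q n : nat)
  (hp : (2 <= p)%N) (hq : (2 <= q)%N) (hn : (1 <= n)%N)
  (A : mxd R p n) (B : mxd R q n) :
  Omega1 A -> Omega1 B -> Omega1 (mxd_mul A B).
Proof.
move=> [A0 A1] [B0 B1]; split.
  by move=> i; apply: sumr_ge0 => j _; apply: mulr_ge0.
move=> k i; rewrite /mxd_mul exchange_big /=.
set j0 : 'I_n := Ordinal hn.
have hk := ltn_ord k.
case: (ltnP k (p - 1)) => hkp.
- have kp : (k < p)%N by apply: (leq_trans hkp); rewrite leq_subr.
  pose i0 : 'I_q := Ordinal (leq_trans (isT : 0 < 2)%N hq).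
  transitivity (\sum_(j < n) B (setpos
     [ffun l : 'I_q => if l == 0%N :> nat then j0 else Defs.coord i (p - 1 + (l - 1)) j0] i0 j)); last exact: B1.
  apply: eq_bigr => j _.
  transitivity (\sum_(t < n) A (setpos
     [ffun l : 'I_p => if (l < p - 1)%N then Defs.coord i l j else j] (Ordinal kp) t) *
     B (setpos
     [ffun l : 'I_q => if l == 0%N :> nat then j0 else Defs.coord i (p - 1 + (l - 1)) j0] i0 j)).
    apply: eq_bigr => t _; congr (A _ * B _); apply/ffunP => l; rewrite !ffunE.
      rewrite coord_setpos /=; case: ifP => hl.
        by [].
      by case: eqP => // hlk; rewrite hlk /= hkp in hl.
    rewrite /= coord_setpos.
    case: (eqVneq l i0) => [->//|hl0].
    have hl : (nat_of_ord l != 0)%N by apply: contra hl0 => /eqP h; apply/eqP/val_inj.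
    rewrite (negbTE hl) ifF; last by apply/eqP; lia.
    apply: coord_def; have := ltn_ord l; lia.
  by rewrite -mulr_suml A1 mul1r.
- have kq : (k - (p - 1) + 1 < q)%N by lia.
  have hpm : (p - 1 < p)%N by lia.
  pose im : 'I_p := Ordinal hpm.
  transitivity (\sum_(j < n) A (setpos
     [ffun l : 'I_p => if (l < p - 1)%N then Defs.coord i l j0 else j0] im j)); last exact: A1.
  apply: eq_bigr => j _.
  transitivity (\sum_(t < n) A (setpos
     [ffun l : 'I_p => if (l < p - 1)%N then Defs.coord i l j0 else j0] im j) *
     B (setpos [ffun l : 'I_q => if l == 0%N :> nat then j else Defs.coord i (p - 1 + (l - 1)) j]
        (Ordinal kq) t)).
    apply: eq_bigr => t _; congr (A _ * B _); apply/ffunP => l; rewrite !ffunE.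
      case: (eqVneq l im) => [->|hl] /=; first by rewrite ltnn.
      have hl' : (l < p - 1)%N.
        have := ltn_ord l; have : nat_of_ord l != (p - 1)%N by apply: contra hl => /eqP h; apply/eqP/val_inj.
        lia.
      rewrite hl' coord_setpos ifF; last by apply/eqP; lia.
      apply: coord_def; have := ltn_ord k; lia.
    rewrite coord_setpos.
    case: (eqVneq l (Ordinal kq)) => [->|hl] /=.
      rewrite addn1 /= ifT //; apply/eqP; lia.
    case: eqP => // hl0; rewrite ifF //; apply/eqP => h; move/eqP: hl; apply; apply: val_inj => /=; lia.
  by rewrite -mulr_sumr B1 mulr1.
Qed.
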